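(* Let $G=(X,E)$ be a graph with $|X|\ge4$. Then $G$ is a polar-cat if and only if there exist a vertex $v\in X$ and two ordered sets $Y=\{y_1,\dots,y_{k-1},y_k=v\}$ and $Z=\{z_1,\dots,z_{m-1},z_m=v\}$ with $k,m\ge2$, $Y\cap Z=\{v\}$ and $Y\cup Z=X$, such that one of the following holds: (a) $G[Y]$ and $G[Z]$ are connected and the edge set of $G$ consists exactly of the pairs $\{y_i,y_j\}$ with $1\le i<j\le k$, $i$ odd, and the pairs $\{z_i,z_j\}$ with $1\le i<j\le m$, $i$ odd; (b) $G[Y]$ and $G[Z]$ are disconnected and the edge set of $G$ consists exactly of the pairs $\{y_i,y_j\}$ with $1\le i<j\le k$, $i$ even, the pairs $\{z_i,z_j\}$ with $1\le i<j\le m$, $i$ even, and all pairs $\{y,z\}$ with $y\in Y\setminus\{v\}$, $z\in Z\setminus\{v\}$. In this case $G$ is a $(v,G[Y],G[Z])$-polar-cat.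
   Context: Graphs finite, simple, undirected; $G[W]$ induced subgraph; $G-v$ deletion; join of vertex-disjoint graphs adds all edges between them to the disjoint union; a cograph is a graph without induced $P_4$. A caterpillar is a rooted tree whose inner vertices each have two children and induce a path with the root at one end; a cherry is a pair of leaves with a common parent. A cograph is caterpillar-explainable if its unique discriminating cotree (the labeled rooted tree explaining it in which adjacent inner vertices get different labels from $\{0,1\}$; $x,y$ adjacent iff their lowest common ancestor has label 1) is a caterpillar. $G$ is a $(v,G_1,G_2)$-pseudo-cograph if $G_1,G_2$ are induced subgraphs, $v\in V(G)$, with $V(G)=V(G_1)\cup V(G_2)$, $V(G_1)\cap V(G_2)=\{v\}$, $|V(G_1)|,|V(G_2)|>1$, $G_1,G_2$ cographs, and $G-v$ the join or disjoint union of $G_1-v,G_2-v$. Such $G$ with $|V(G)|\ge4$ is a $(v,G_1,G_2)$-polar-cat if either ($G_1,G_2$ both connected and $G-v$ the disjoint union of $G_1-v,G_2-v$) or ($G_1,G_2$ both disconnected and $G-v$ the join), and $G_1,G_2$ are caterpillar-explainable with $v$ part of a cherry in both explaining caterpillars. A polar-cat is a $(v,G_1,G_2)$-polar-cat for some $v,G_1,G_2$. *)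

(* Defs.v *)
(* A graph is G = (T, e) with vertex set all of the finType T
   and edge relation e (symmetric, irreflexive).  Induced subgraphs G[W] are
   represented by their vertex sets W : {set T}. *)
From mathcomp Require Import all_boot.
Set Implicit Arguments. Unset Strict Implicit. Unset Printing Implicit Defensive.

Section Graphs.
Variables (T : finType) (e : rel T).

Definition cograph (W : {set T}) : Prop :=
  forall a b c d, a \in W -> b \in W -> c \in W -> d \in W ->
    e a b -> e b c -> e c d -> ~~ e a c -> ~~ e b d -> ~~ e a d -> False.

Definition connected (W : {set T}) : Prop :=
  W != set0 /\
  forall x y, x \in W -> y \in W ->
    connect (fun a b => [&& a \in W, b \in W & e a b]) x y.

(* Rooted labelled trees with leaves in T; inner vertices carry a label in {0,1}
   (false = 0, true = 1). *)
Inductive cotree : Type := CLeaf of T | CNode of bool & seq cotree.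

Fixpoint leaves (t : cotree) : seq T :=
  match t with CLeaf x => [:: x] | CNode _ ts => flatten (map leaves ts) end.

Definition is_leaf (t : cotree) : bool := if t is CLeaf _ then true else false.
Definition is_leaf_of (v : T) (t : cotree) : bool :=
  if t is CLeaf x then x == v else false.
Definition label_differs (b : bool) (t : cotree) : bool :=
  if t is CNode b' _ then b' != b else true.

Fixpoint discriminating (t : cotree) : bool :=
  match t with
  | CLeaf _ => true
  | CNode b ts => [&& 1 < size ts, all (label_differs b) ts & all discriminating ts]
  end.

Fixpoint lca_label (x y : T) (t : cotree) : bool :=
  match t with
  | CLeaf _ => false
  | CNode b ts =>
      if has (fun c => (x \in leaves c) && (y \in leaves c)) ts
      then has (fun c => [&& x \in leaves c, y \in leaves c & lca_label x y c]) ts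
      else b
  end.

Definition explains (W : {set T}) (t : cotree) : Prop :=
  [/\ uniq (leaves t), (forall x, (x \in leaves t) = (x \in W)) &
      forall x y, x \in W -> y \in W -> x != y -> e x y = lca_label x y t].

Definition discr_cotree_of (W : {set T}) (t : cotree) : Prop :=
  discriminating t /\ explains W t.

(* Caterpillar: every inner vertex has exactly two children, and the inner
   vertices induce a path with the root at one end (each inner vertex has at
   most one inner child). *)
Fixpoint caterpillar (t : cotree) : bool :=
  match t with
  | CLeaf _ => true
  | CNode _ ts => [&& size ts == 2, count (fun c => ~~ is_leaf c) ts <= 1 &
                     all caterpillar ts]
  end.

Fixpoint in_cherry (v : T) (t : cotree) : bool :=
  match t with
  | CLeaf _ => false
  | CNode _ ts => ((1 < count is_leaf ts) && has (is_leaf_of v) ts)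
                  || has (in_cherry v) ts
  end.

Definition caterpillar_explainable (W : {set T}) : Prop :=
  exists t, discr_cotree_of W t /\ caterpillar t.

(* (v, G[V1], G[V2])-pseudo-cograph, with join = true meaning G - v is the join
   and join = false meaning it is the disjoint union of G[V1]-v and G[V2]-v. *)
Definition pseudo_cograph_with (join : bool) (v : T) (V1 V2 : {set T}) : Prop :=
  [/\ V1 :|: V2 = [set: T], V1 :&: V2 = [set v], 1 < #|V1| /\ 1 < #|V2|,
      cograph V1 /\ cograph V2 &
      forall x y, x \in V1 :\ v -> y \in V2 :\ v -> e x y = join].

Definition pseudo_cograph (v : T) (V1 V2 : {set T}) : Prop :=
  pseudo_cograph_with true v V1 V2 \/ pseudo_cograph_with false v V1 V2.

Definition polar_cat_at (v : T) (V1 V2 : {set T}) : Prop :=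
  [/\ 4 <= #|T| /\ pseudo_cograph v V1 V2,
      (connected V1 /\ connected V2 /\ pseudo_cograph_with false v V1 V2)
      \/ (~ connected V1 /\ ~ connected V2 /\ pseudo_cograph_with true v V1 V2),
      caterpillar_explainable V1, caterpillar_explainable V2 &
      (exists t1, [/\ discr_cotree_of V1 t1, caterpillar t1 & in_cherry v t1]) /\
      (exists t2, [/\ discr_cotree_of V2 t2, caterpillar t2 & in_cherry v t2])].

Definition polar_cat : Prop := exists v V1 V2, polar_cat_at v V1 V2.

(* {x,y} = {s_i, s_j} for some 1 <= i < j <= size s (1-indexed) with
   odd i = par. *)
Definition seq_edge (par : bool) (s : seq T) (x y : T) : Prop :=
  exists i j, [/\ i < j < size s, odd i.+1 = par &
     (x = nth x s i /\ y = nth x s j) \/ (y = nth x s i /\ x = nth x s j)].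

Definition polar_cat_shape (v : T) (ys zs : seq T) : Prop :=
  [/\ uniq ys /\ uniq zs, 2 <= size ys /\ 2 <= size zs,
      last v ys = v /\ last v zs = v,
      ([set x in ys] :&: [set x in zs] = [set v]) /\
      ([set x in ys] :|: [set x in zs] = [set: T]) &
      (connected [set x in ys] /\ connected [set x in zs] /\
       forall x y, e x y <-> seq_edge true ys x y \/ seq_edge true zs x y)
   \/ (~ connected [set x in ys] /\ ~ connected [set x in zs] /\
       forall x y, e x y <->
         [\/ seq_edge false ys x y, seq_edge false zs x y,
             (x \in [set z in ys] :\ v /\ y \in [set z in zs] :\ v) |
             (y \in [set z in ys] :\ v /\ x \in [set z in zs] :\ v)])].

End Graphs.

(* Main.v *)
Require Import Defs.
From mathcomp Require Import all_boot.
From mathcomp Require Import zify.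
Set Implicit Arguments. Unset Strict Implicit. Unset Printing Implicit Defensive.


Section A.
Variable T : finType.
Implicit Types (s : seq T) (x y a : T) (b : bool).

Definition lab b s x y := (odd (minn (index x s) (index y s)).+1 == b).
Definition sadj b s x y := [&& x \in s, y \in s, x != y & lab b s x y].

Lemma labC b s x y : lab b s x y = lab b s y x.
Proof. by rewrite /lab minnC. Qed.

Lemma lab_cons b a s x y : x != a -> y != a -> lab b (a :: s) x y = lab (~~b) s x y.
Proof.
move=> xa ya; rewrite /lab /= (eq_sym a x) (eq_sym a y) (negbTE xa) (negbTE ya) minnSS /=.
by case: (odd _); case: b.
Qed.

Lemma lab_head b a s y : lab b (a :: s) a y = b.
Proof. by rewrite /lab /= eqxx min0n /=; case: b. Qed.

Lemma seq_edgeP par s x y : uniq s -> (seq_edge par s x y <-> sadj par s x y).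
Proof.
move=> us; split.
  case=> i [j [/andP [ij js] hpar H]].
  have is_ : i < size s by apply: ltn_trans js.
  have gen : forall u w, u = nth x s i -> w = nth x s j -> sadj par s u w.
    move=> u w -> ->; rewrite /sadj /lab !mem_nth //= nth_uniq // !index_uniq //.
    rewrite (minn_idPl (ltnW ij)) -hpar /= eqxx andbT.
    by rewrite neq_ltn ij.
  case: H => [[hx hy]|[hy hx]]; first exact: gen hx hy.
  have := gen _ _ hy hx; rewrite /sadj /lab minnC (eq_sym y x).
  by case/and4P=> -> -> -> ->.
case/and4P=> xs ys xy hl.
have ne : index x s != index y s.
  apply: contra xy => /eqP h; apply/eqP.
  by rewrite -(nth_index x xs) h nth_index.
move: hl; rewrite /lab; case: (ltngtP (index x s) (index y s)) ne => // h _.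
  move=> /eqP hp.
  exists (index x s), (index y s); split => //.
    by rewrite h index_mem.
  by left; rewrite !nth_index.
move=> /eqP hp.
exists (index y s), (index x s); split => //.
  by rewrite h index_mem.
by right; rewrite !nth_index.
Qed.

Fixpoint catf b s : cotree T :=
  match s with
  | [::] => CNode b [::]
  | x :: s' => if s' is [::] then CLeaf x else CNode b [:: CLeaf x; catf (~~b) s']
  end.

Lemma catf_cons b x y r : catf b [:: x, y & r] = CNode b [:: CLeaf x; catf (~~b) (y :: r)].
Proof. by []. Qed.

Lemma leaves_catf b s : s != [::] -> leaves (catf b s) = s.
Proof.
elim: s b => [//|x s IH] b _.
case: s IH => [//|y r] IH.
by rewrite catf_cons /= cats0 IH.
Qed.

Lemma disc_catf b s : discriminating (catf b s) || (s == [::]).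
Proof.
elim: s b => [//|x s IH] b.
case: s IH => [//|y r] IH.
rewrite catf_cons /= andbT.
have := IH (~~b); rewrite orbF => ->; rewrite andbT.
case: r {IH} => [|z r] //=; by case: b.
Qed.

Lemma cat_catf b s : s != [::] -> caterpillar (catf b s).
Proof.
elim: s b => [//|x s IH] b _.
case: s IH => [//|y r] IH.
by move: (IH (~~b) isT); rewrite catf_cons /=; case: r {IH} => //= z r ->.
Qed.

Lemma cherry_catf b x y r : in_cherry (last x (y :: r)) (catf b [:: x, y & r]).
Proof.
elim: r b x y => [|z r IH] b x y.
  by rewrite /= eqxx orbT.
by rewrite catf_cons; move: (IH (~~b) y z) => /= ->.
Qed.

Lemma lca_catf b s x y : uniq s -> x \in s -> y \in s -> x != y ->
  lca_label x y (catf b s) = lab b s x y.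
Proof.
elim: s b => [//|a s IH] b /= /andP [as_ us].
case: s IH as_ us => [|c r] IH as_ us.
  by rewrite !inE => /eqP -> /eqP ->; rewrite eqxx.
move=> xs ys xy.
have L := leaves_catf (~~b) (isT : c :: r != [::]).
have IH' := IH (~~b) us.
move: L IH'; set t := catf _ _ => L IH'.
rewrite /= L !mem_seq1.
have [xa|xa] := eqVneq x a.
  subst x; rewrite (negbTE as_) /= andbF /= eq_sym (negbTE xy).
  by rewrite lab_head.
have [ya|ya] := eqVneq y a.
  subst y; rewrite (negbTE as_) /= !andbF /=.
  by rewrite labC lab_head.
move: xs ys; rewrite !in_cons (negbTE xa) (negbTE ya) /= => xs ys.
by rewrite xs ys /= IH' // orbF [RHS]lab_cons.
Qed.

End A.

Section B.
Variable T : finType.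
Implicit Types (s : seq T) (x y a : T) (b : bool).

Lemma lab_le b s x y : index x s <= index y s -> lab b s x y = (odd (index x s).+1 == b).
Proof. by move=> h; rewrite /lab (minn_idPl h). Qed.

Lemma min4 (p q r t : nat) : (p <= q /\ p <= r /\ p <= t) \/ (q <= p /\ q <= r /\ q <= t)
  \/ (r <= p /\ r <= q /\ r <= t) \/ (t <= p /\ t <= q /\ t <= r).
Proof. lia. Qed.

Lemma sadj_cograph (e : rel T) b s : symmetric e ->
  (forall x y, x \in s -> y \in s -> e x y = sadj b s x y) -> cograph e [set x in s].
Proof.
move=> esym H a1 b1 c1 d1; rewrite !inE => ha hb hc hd eab ebc ecd nac nbd nad.
have aux : forall x u w, x \in s -> u \in s -> w \in s -> x != w ->
   index x s <= index u s -> index x s <= index w s -> e x u -> ~~ e x w -> False.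
  move=> x u w xs us ws xw hu hw exu nxw.
  move: exu nxw; rewrite !H // /sadj xs us ws xw /= !lab_le //.
  by case/andP=> _ ->.
have ac : a1 != c1 by apply/eqP => h; subst c1; rewrite ecd in nad.
have bd : b1 != d1 by apply/eqP => h; subst d1; rewrite eab in nad.
have ad : a1 != d1 by apply/eqP => h; subst d1; rewrite esym ecd in nac.
set ia := index a1 s; set ib := index b1 s; set ic := index c1 s; set id := index d1 s.
have Ha : ia <= ib -> ia <= ic -> ia <= id -> False.
  by move=> *; apply: (aux a1 b1 c1).
have Hb : ib <= ia -> ib <= ic -> ib <= id -> False.
  by move=> *; apply: (aux b1 a1 d1) => //; rewrite (esym b1).
have Hc : ic <= ia -> ic <= ib -> ic <= id -> False.
  by move=> *; apply: (aux c1 b1 a1) => //; rewrite ?(eq_sym c1) ?(esym c1).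
have Hd : id <= ia -> id <= ib -> id <= ic -> False.
  by move=> *; apply: (aux d1 c1 a1) => //; rewrite ?(eq_sym d1) ?(esym d1).
have [[? [? ?]]|[[? [? ?]]|[[? [? ?]]|[? [? ?]]]]] := min4 ia ib ic id.
- exact: Ha.
- exact: Hb.
- exact: Hc.
- exact: Hd.
Qed.

Lemma sadj_not_connected (e : rel T) s : uniq s -> 1 < size s ->
  (forall x y, x \in s -> y \in s -> e x y = sadj false s x y) -> ~ connected e [set x in s].
Proof.
case: s => [//|a [//|c r]] us _ H [_ C].
have := C a c; rewrite !inE !eqxx orbT => /(_ isT isT).
case/connectP=> [[|z p]] /=.
  move=> _ ca; move: us; rewrite ca /= in_cons eqxx //.
case/andP=> /and3P [_ zin ez] _ _.
move: ez; rewrite inE in zin; rewrite H ?mem_head // /sadj mem_head zin /=.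
by rewrite lab_head andbF.
Qed.

Lemma sadj_connected (e : rel T) s : 1 < size s ->
  (forall x y, x \in s -> y \in s -> e x y = sadj true s x y) -> connected e [set x in s].
Proof.
case: s => [//|a r] _ H; split.
  by apply/set0Pn; exists a; rewrite inE mem_head.
have ha : forall x, x \in a :: r -> x != a ->
   [&& x \in [set z in a :: r], a \in [set z in a :: r] & e x a].
  move=> x xs xa; rewrite !in_set xs mem_head H ?mem_head // /sadj xs mem_head xa /=.
  by rewrite labC lab_head.
move=> x y; rewrite !in_set => xs ys.
apply: (@connect_trans _ _ a).
  have [->|xa] := eqVneq x a; first exact: connect0.
  by apply: connect1; apply: ha.
have [->|ya] := eqVneq y a; first exact: connect0.
apply: connect1; rewrite !in_set mem_head ys H ?mem_head // /sadj mem_head ys eq_sym ya.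
by rewrite lab_head.
Qed.

End B.

Section C.
Variable T : finType.
Implicit Types (s : seq T) (x y a : T) (b : bool) (c : cotree T).

Fixpoint ht (t : cotree T) : nat :=
  match t with CLeaf _ => 0 | CNode _ ts => (foldr maxn 0 (map ht ts)).+1 end.

Lemma ht_node2 b c1 c2 : ht (CNode b [:: c1; c2]) = (maxn (ht c1) (ht c2)).+1.
Proof. by rewrite /= maxn0. Qed.

Lemma leaves_node2 b c1 c2 : leaves (CNode b [:: c1; c2]) = leaves c1 ++ leaves c2.
Proof. by rewrite /= cats0. Qed.

Lemma lca_swap b c1 c2 y z :
  lca_label y z (CNode b [:: c1; c2]) = lca_label y z (CNode b [:: c2; c1]).
Proof.
rewrite /=; case: (y \in leaves c1); case: (z \in leaves c1);
case: (y \in leaves c2); case: (z \in leaves c2) => //=;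
by case: (lca_label y z c1); case: (lca_label y z c2).
Qed.

Lemma step b x c s' : x \notin s' -> (forall z, (z \in leaves c) = (z \in s')) ->
  (forall y z, y \in s' -> z \in s' -> y != z -> lca_label y z c = lab (~~b) s' y z) ->
  forall y z, y \in x :: s' -> z \in x :: s' -> y != z ->
  lca_label y z (CNode b [:: CLeaf x; c]) = lab b (x :: s') y z.
Proof.
move=> xs L H y z ys zs yz; rewrite /= !L !mem_seq1.
have [yx|yx] := eqVneq y x.
  subst y; rewrite (negbTE xs) /= andbF /= orbF (eq_sym z x) (negbTE yz).
  by rewrite lab_head.
have [zx|zx] := eqVneq z x.
  subst z; rewrite (negbTE xs) /= !andbF /=.
  by rewrite labC lab_head.
move: ys zs; rewrite !in_cons (negbTE yx) (negbTE zx) /= => ys zs.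
by rewrite ys zs /= H // orbF [RHS]lab_cons.
Qed.

Lemma cherry_LN v b x c : ~~ is_leaf c ->
  in_cherry v (CNode b [:: CLeaf x; c]) = in_cherry v c.
Proof. by move=> nl; rewrite [LHS]/= (negbTE nl) /= orbF. Qed.

Lemma cherry_NL v b x c : ~~ is_leaf c ->
  in_cherry v (CNode b [:: c; CLeaf x]) = in_cherry v c.
Proof. by move=> nl; rewrite [LHS]/= (negbTE nl) /= !orbF. Qed.

Definition good v b (t : cotree T) s :=
  [/\ uniq s, forall x, (x \in leaves t) = (x \in s), 1 < size s, last v s = v &
      forall x y, x \in s -> y \in s -> x != y -> lca_label x y t = lab b s x y].

Lemma extract v n : forall t b ts, ht t <= n -> t = CNode b ts -> discriminating t ->
  caterpillar t -> uniq (leaves t) -> in_cherry v t -> exists s, good v b t s.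
Proof.
elim: n => [|n IH] t b ts; first by move=> hn Et; rewrite Et in hn.
move=> hn Et; subst t.
case: ts hn => [|c1 [|c2 [|? ?]]] //= hn.
rewrite !andbT.
case/and3P=> /andP [ld1 ld2] d1 d2.
case/and3P=> cnt ct1 ct2.
rewrite cats0 cat_uniq => /and3P [u1 dj u2] hch.
rewrite maxn0 in hn; rewrite /good.
have LN : forall x c, leaves (CLeaf x) = [:: x] -> ~~ is_leaf c -> ht c <= n ->
    discriminating c -> caterpillar c -> uniq (leaves c) -> x \notin leaves c ->
    label_differs b c -> in_cherry v c ->
    exists s, [/\ uniq (x :: s), forall z, (z \in x :: leaves c) = (z \in x :: s),
      1 < size (x :: s), last v (x :: s) = v &
      forall y z, y \in x :: s -> z \in x :: s -> y != z ->
      lca_label y z (CNode b [:: CLeaf x; c]) = lab b (x :: s) y z].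
  move=> x c _ nl hc dc cc uc xc ldc chc.
  case: c nl hc dc cc uc xc ldc chc => [//|b' ts'] _ hc dc cc uc xc ldc chc.
  have [s [us Ls ss ls Hs]] := IH _ b' ts' hc erefl dc cc uc chc.
  have xs : x \notin s by rewrite -Ls.
  exists s; split.
  - by rewrite /= xs us.
  - by move=> z; rewrite !in_cons Ls.
  - by case: s ss {us Ls Hs xs} ls => [|? ?].
  - by case: s ss {us Ls Hs xs} ls => [|? ?].
  apply: step => //.
  have -> : ~~ b = b' by move: ldc => /=; case: (b); case: (b').
  exact: Hs.
case: c1 ld1 d1 ct1 u1 dj hn cnt hch => [x|b1 ts1] ld1 d1 ct1 u1 dj hn cnt hch;
case: c2 ld2 d2 ct2 u2 dj hn cnt hch => [y|b2 ts2] ld2 d2 ct2 u2 dj hn cnt hch.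
-
  have xy : x != y by move: dj => /=; rewrite orbF mem_seq1 eq_sym.
  rewrite /= !orbF in hch.
  have vac : forall y0 z0, y0 \in [:: y] -> z0 \in [:: y] -> y0 != z0 ->
     lca_label y0 z0 (CLeaf y) = lab (~~b) [:: y] y0 z0.
    by move=> y0 z0; rewrite !inE => /eqP -> /eqP ->; rewrite eqxx.
  case/orP: hch => [/eqP xv|/eqP yv].
  + exists [:: y; x]; split => //.
    * by rewrite /= inE eq_sym xy.
    * by move=> z; rewrite /= !inE orbC.
    * move=> y0 z0 hy hz hyz; rewrite lca_swap; apply: step => //.
      - by rewrite inE eq_sym.
      - by move=> y1 z1; rewrite !inE => /eqP -> /eqP ->; rewrite eqxx.
  + exists [:: x; y]; split => //.
    * by rewrite /= inE xy.
    * move=> y0 z0 hy hz hyz; apply: step => //; by rewrite inE.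
-
  have xn : x \notin leaves (CNode b2 ts2).
    by apply: contra dj => h; apply/hasP; exists x => //; rewrite inE.
  have hc2 : in_cherry v (CNode b2 ts2).
    move: hch; move: (CNode b2 ts2) (erefl : is_leaf (CNode b2 ts2) = false) => c lc.
    by rewrite /= lc; case: (in_cherry v c).
  have [s [us Ls ss ls Hs]] := LN x (CNode b2 ts2) erefl isT
    (leq_trans (leq_maxr _ _) (ltnSE hn)) d2 ct2 u2 xn
    ld2 hc2.
  exists (x :: s); split => //.
  by move=> z; rewrite -Ls /= cats0.
-
  have yn : y \notin leaves (CNode b1 ts1).
    by apply: contra dj => h; apply/hasP; exists y => //; rewrite inE.
  have hc1 : in_cherry v (CNode b1 ts1).
    move: hch; move: (CNode b1 ts1) (erefl : is_leaf (CNode b1 ts1) = false) => c lc.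
    by rewrite /= lc; case: (in_cherry v c); rewrite /= ?orbT.
  have [s [us Ls ss ls Hs]] := LN y (CNode b1 ts1) erefl isT
    (leq_trans (leq_maxl _ _) (ltnSE hn)) d1 ct1 u1
    yn
    ld1 hc1.
  exists (y :: s); split => //.
  + by move=> z; rewrite -Ls leaves_node2 mem_cat orbC !in_cons in_nil orbF.
  + by move=> y0 z0 hy hz hyz; rewrite lca_swap; apply: Hs.
- by [].
Qed.

End C.

Section D.
Variable T : finType.
Implicit Types (s ys zs : seq T) (x y a v : T) (b j : bool).

Definition full b j v ys zs x y :=
  [|| sadj b ys x y, sadj b zs x y,
      j && ((x \in [set z in ys] :\ v) && (y \in [set z in zs] :\ v)) |
      j && ((y \in [set z in ys] :\ v) && (x \in [set z in zs] :\ v))].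

Lemma inter_v v ys zs x : [set z in ys] :&: [set z in zs] = [set v] ->
  x \in ys -> x \in zs -> x = v.
Proof.
move=> HI xy xz; apply/set1P; rewrite -HI inE !inE xy xz //.
Qed.

Lemma full_YY b j v ys zs x y : [set z in ys] :&: [set z in zs] = [set v] ->
  x \in ys -> y \in ys -> full b j v ys zs x y = sadj b ys x y.
Proof.
move=> HI xY yY; rewrite /full.
have nB : sadj b zs x y = false.
  apply/negbTE/negP => /and4P [xz yz xy _].
  by rewrite (inter_v HI xY xz) (inter_v HI yY yz) eqxx in xy.
have nC : ((x \in [set z in ys] :\ v) && (y \in [set z in zs] :\ v)) = false.
  apply/negbTE/negP; rewrite !inE => /andP [/andP [_ _] /andP [yv yz]].
  by rewrite (inter_v HI yY yz) eqxx in yv.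
have nD : ((y \in [set z in ys] :\ v) && (x \in [set z in zs] :\ v)) = false.
  apply/negbTE/negP; rewrite !inE => /andP [/andP [_ _] /andP [xv xz]].
  by rewrite (inter_v HI xY xz) eqxx in xv.
by rewrite nB nC nD !andbF !orbF.
Qed.

Lemma full_ZZ b j v ys zs x y : [set z in ys] :&: [set z in zs] = [set v] ->
  x \in zs -> y \in zs -> full b j v ys zs x y = sadj b zs x y.
Proof.
move=> HI xZ yZ; rewrite /full.
have nA : sadj b ys x y = false.
  apply/negbTE/negP => /and4P [xy' yy xy _].
  by rewrite (inter_v HI xy' xZ) (inter_v HI yy yZ) eqxx in xy.
have nC : ((x \in [set z in ys] :\ v) && (y \in [set z in zs] :\ v)) = false.
  apply/negbTE/negP; rewrite !inE => /andP [/andP [xv xY] _].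
  by rewrite (inter_v HI xY xZ) eqxx in xv.
have nD : ((y \in [set z in ys] :\ v) && (x \in [set z in zs] :\ v)) = false.
  apply/negbTE/negP; rewrite !inE => /andP [/andP [yv yY] _].
  by rewrite (inter_v HI yY yZ) eqxx in yv.
by rewrite nA nC nD !andbF !orbF.
Qed.

Lemma full_YZ b j v ys zs x y : [set z in ys] :&: [set z in zs] = [set v] ->
  x \in [set z in ys] :\ v -> y \in [set z in zs] :\ v -> full b j v ys zs x y = j.
Proof.
move=> HI hx hy; rewrite /full hx hy /=.
move: hx hy; rewrite !inE => /andP [xv xY] /andP [yv yZ].
have nA : sadj b ys x y = false.
  apply/negbTE/negP => /and4P [_ yY _ _].
  by rewrite (inter_v HI yY yZ) eqxx in yv.
have nB : sadj b zs x y = false.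
  apply/negbTE/negP => /and4P [xZ _ _ _].
  by rewrite (inter_v HI xY xZ) eqxx in xv.
by rewrite nA nB andbT /=; case: j.
Qed.

Lemma sadjC b s x y : sadj b s x y = sadj b s y x.
Proof. by rewrite /sadj labC eq_sym; case: (x \in s); case: (y \in s). Qed.

Lemma full_sym b j v ys zs x y : full b j v ys zs x y = full b j v ys zs y x.
Proof.
rewrite /full (sadjC b ys) (sadjC b zs).
case: (sadj b ys y x); case: (sadj b zs y x) => //=; by rewrite orbC.
Qed.

Lemma full_fwd (e : rel T) b j v ys zs : symmetric e ->
  [set z in ys] :&: [set z in zs] = [set v] -> [set z in ys] :|: [set z in zs] = setT ->
  (forall x y, x \in ys -> y \in ys -> e x y = sadj b ys x y) ->
  (forall x y, x \in zs -> y \in zs -> e x y = sadj b zs x y) ->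
  (forall x y, x \in [set z in ys] :\ v -> y \in [set z in zs] :\ v -> e x y = j) ->
  forall x y, e x y = full b j v ys zs x y.
Proof.
move=> esym HI HU HY HZ HC x y.
have mem : forall u, (u \in ys) || (u \in zs).
  by move=> u; move: (in_setT u); rewrite -HU !inE.
have vY : v \in ys by move: HI => /setP /(_ v); rewrite !inE eqxx => /andP [].
have vZ : v \in zs by move: HI => /setP /(_ v); rewrite !inE eqxx => /andP [].
have [xY|xY] := boolP (x \in ys); have [yY|yY] := boolP (y \in ys).
- by rewrite (full_YY b j HI xY yY) HY.
- have yZ : y \in zs by move: (mem y); rewrite (negbTE yY).
  have [xv|xv] := eqVneq x v.
    have xZ : x \in zs by rewrite xv.
    by rewrite (full_ZZ b j HI xZ yZ) HZ.
  have yv : y != v by apply: contraNneq yY => ->.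
  have hx : x \in [set z in ys] :\ v by rewrite !inE xv xY.
  have hy : y \in [set z in zs] :\ v by rewrite !inE yv yZ.
  by rewrite (full_YZ b j HI hx hy) HC.
- have xZ : x \in zs by move: (mem x); rewrite (negbTE xY).
  have [yv|yv] := eqVneq y v.
    have yZ : y \in zs by rewrite yv.
    by rewrite (full_ZZ b j HI xZ yZ) HZ.
  have xv : x != v by apply: contraNneq xY => ->.
  have hy : y \in [set z in ys] :\ v by rewrite !inE yv yY.
  have hx : x \in [set z in zs] :\ v by rewrite !inE xv xZ.
  by rewrite esym full_sym (full_YZ b j HI hy hx) HC.
- have xZ : x \in zs by move: (mem x); rewrite (negbTE xY).
  have yZ : y \in zs by move: (mem y); rewrite (negbTE yY).
  by rewrite (full_ZZ b j HI xZ yZ) HZ.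
Qed.

End D.

Section E.
Variable T : finType.
Implicit Types (s ys zs : seq T) (x y a v : T) (b j : bool).

Lemma tree_of (e : rel T) b v s : uniq s -> 1 < size s -> last v s = v ->
  (forall x y, x \in s -> y \in s -> e x y = sadj b s x y) ->
  exists t, [/\ discr_cotree_of e [set x in s] t, caterpillar t & in_cherry v t].
Proof.
case: s => [//|x [//|y r]] us _ ls H.
exists (catf b [:: x, y & r]); split.
- split; first by have := disc_catf b [:: x, y & r]; rewrite orbF.
  split; rewrite ?leaves_catf //.
    by move=> z; rewrite in_set.
  move=> x0 y0; rewrite !in_set => hx hy hxy.
  by rewrite H // lca_catf // /sadj hx hy hxy.
- exact: cat_catf.
- have E : last x (y :: r) = v by exact: ls.
  rewrite -E; exact: cherry_catf.
Qed.

Lemma seq_of (e : rel T) v W t : irreflexive e -> discr_cotree_of e W t ->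
  caterpillar t -> in_cherry v t ->
  exists b s, [/\ uniq s, W = [set x in s], 1 < size s, last v s = v &
     forall x y, x \in s -> y \in s -> e x y = sadj b s x y].
Proof.
move=> eirr [Dt [ut mt lt]] Ct Ch.
case: t Dt ut mt lt Ct Ch => [//|b ts] Dt ut mt lt Ct Ch.
have [s [us Ls ss ls Hs]] := extract (leqnn _) erefl Dt Ct ut Ch.
exists b, s; split => //.
  by apply/setP => z; rewrite inE -Ls mt.
move=> x y xs ys.
have [<-|xy] := eqVneq x y.
  by rewrite eirr /sadj eqxx !andbF.
rewrite lt -?mt ?Ls // Hs //.
by rewrite /sadj xs ys xy.
Qed.

Lemma part2 (e : rel T) v ys zs : symmetric e -> irreflexive e -> 4 <= #|T| ->
  polar_cat_shape e v ys zs -> polar_cat_at e v [set x in ys] [set x in zs].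
Proof.
move=> esym eirr hX [[uy uz] [sy sz] [ly lz] [HI HU] Hc].
have [b [Hf Hcn]] : exists b, (forall x y, e x y = full b (~~b) v ys zs x y) /\
   (if b then connected e [set x in ys] /\ connected e [set x in zs]
    else ~ connected e [set x in ys] /\ ~ connected e [set x in zs]).
  case: Hc => [[c1 [c2 H]]|[c1 [c2 H]]].
    exists true; split => // x y; rewrite /full /= !orbF; apply/idP/orP.
      by move/H => [h|h]; [left; exact/(seq_edgeP _ _ _ uy) | right; exact/(seq_edgeP _ _ _ uz)].
    by move=> [h|h]; apply/H; [left; exact/(seq_edgeP _ _ _ uy) | right; exact/(seq_edgeP _ _ _ uz)].
  exists false; split => // x y; rewrite /full /=; apply/idP/or4P.
    move/H => [h|h|h|h].
    - by constructor 1; exact/(seq_edgeP _ _ _ uy).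
    - by constructor 2; exact/(seq_edgeP _ _ _ uz).
    - by constructor 3; apply/andP.
    - by constructor 4; apply/andP.
  move=> [h|h|/andP h|/andP h]; apply/H.
  - by constructor 1; exact/(seq_edgeP _ _ _ uy).
  - by constructor 2; exact/(seq_edgeP _ _ _ uz).
  - by constructor 3.
  - by constructor 4.
have HY : forall x y, x \in ys -> y \in ys -> e x y = sadj b ys x y.
  by move=> x y hx hy; rewrite Hf (full_YY _ _ HI hx hy).
have HZ : forall x y, x \in zs -> y \in zs -> e x y = sadj b zs x y.
  by move=> x y hx hy; rewrite Hf (full_ZZ _ _ HI hx hy).
have HC : forall x y, x \in [set z in ys] :\ v -> y \in [set z in zs] :\ v -> e x y = ~~ b.
  by move=> x y hx hy; rewrite Hf (full_YZ _ _ HI hx hy).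
have PC : pseudo_cograph_with e (~~b) v [set x in ys] [set x in zs].
  split => //.
  - by rewrite !cardsE (card_uniqP uy) (card_uniqP uz).
  - by split; [exact: (sadj_cograph esym HY) | exact: (sadj_cograph esym HZ)].
have [t1 [D1 C1 Ch1]] := tree_of uy sy ly HY.
have [t2 [D2 C2 Ch2]] := tree_of uz sz lz HZ.
split.
- split => //; by case: b Hf HY HZ HC Hcn PC => /= ? ? ? ? ? PC; [right | left].
- by case: b Hf HY HZ HC Hcn PC => /= ? ? ? ? [? ?] PC; [left | right].
- by exists t1.
- by exists t2.
- by split; [exists t1 | exists t2].
Qed.

Lemma part1 (e : rel T) v V1 V2 : symmetric e -> irreflexive e ->
  polar_cat_at e v V1 V2 -> exists ys zs, polar_cat_shape e v ys zs.
Proof.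
move=> esym eirr [[_ Ps] Hcn _ _ [[t1 [D1 C1 Ch1]] [t2 [D2 C2 Ch2]]]].
have [b1 [s1 [u1 E1 sz1 l1 H1]]] := seq_of eirr D1 C1 Ch1.
have [b2 [s2 [u2 E2 sz2 l2 H2]]] := seq_of eirr D2 C2 Ch2.
subst V1 V2.
have [HU HI] : [set x in s1] :|: [set x in s2] = setT /\ [set x in s1] :&: [set x in s2] = [set v].
  by case: Ps => [[? ? _ _ _]|[? ? _ _ _]].
exists s1, s2; split => //.
case: Hcn => [[c1 [c2 [_ _ _ _ HC]]]|[c1 [c2 [_ _ _ _ HC]]]].
  have b1t : b1 = true.
    by case: b1 H1 => // H1; case: (sadj_not_connected u1 sz1 H1 c1).
  have b2t : b2 = true.
    by case: b2 H2 => // H2; case: (sadj_not_connected u2 sz2 H2 c2).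
  subst b1 b2.
  have Hf := full_fwd esym HI HU H1 H2 HC.
  left; split => //; split => // x y; rewrite Hf /full /= !orbF; split.
    by move=> /orP [h|h]; [left; exact/(seq_edgeP _ _ _ u1) | right; exact/(seq_edgeP _ _ _ u2)].
  by move=> [h|h]; apply/orP; [left; exact/(seq_edgeP _ _ _ u1) | right; exact/(seq_edgeP _ _ _ u2)].
have b1f : b1 = false.
  by case: b1 H1 => // H1; case: (c1 (sadj_connected sz1 H1)).
have b2f : b2 = false.
  by case: b2 H2 => // H2; case: (c2 (sadj_connected sz2 H2)).
subst b1 b2.
have Hf := full_fwd esym HI HU H1 H2 HC.
right; split => //; split => // x y; rewrite Hf /full /=; split.
  move=> /or4P [h|h|/andP h|/andP h].
  - by constructor 1; exact/(seq_edgeP _ _ _ u1).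
  - by constructor 2; exact/(seq_edgeP _ _ _ u2).
  - by constructor 3.
  - by constructor 4.
move=> [h|h|h|h]; apply/or4P.
- by constructor 1; exact/(seq_edgeP _ _ _ u1).
- by constructor 2; exact/(seq_edgeP _ _ _ u2).
- by constructor 3; apply/andP.
- by constructor 4; apply/andP.
Qed.

End E.

Theorem mainTheorem15 (T : finType) (e : rel T)
    (e_sym : symmetric e) (e_irr : irreflexive e) (hX : 4 <= #|T|) :
  (polar_cat e <-> exists v ys zs, polar_cat_shape e v ys zs) /\
  (forall v ys zs, polar_cat_shape e v ys zs ->
     polar_cat_at e v [set x in ys] [set x in zs]).
Proof.
split; last by move=> v ys zs; exact: part2.
split.
  by move=> [v [V1 [V2 P]]]; exists v; exact: part1 P.
move=> [v [ys [zs S]]]; exists v, [set x in ys], [set x in zs].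
exact: part2.
Qed.
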